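(* For every $K\in\mathcal{S}_n$, \[K=\bigcap_{x\in\mathbb{R}^n}\bigl(x+\delta(\{x\},K)\,B_2^n\bigr).\]
   Context: $B_2^n$ is the closed Euclidean unit ball in $\mathbb{R}^n$; $\delta$ is the Hausdorff distance $\delta(K_0,K_1)=\inf\{\lambda>0: K_0\subseteq K_1+\lambda B_2^n,\ K_1\subseteq K_0+\lambda B_2^n\}$. $\mathcal{S}_n$ is the set of convex bodies (compact convex non-empty sets) in $\mathbb{R}^n$ which are intersections of Euclidean unit balls. *)

(* Defs.v *)
From HB Require Import structures.
From mathcomp Require Import all_boot all_order all_algebra.
From mathcomp Require Import all_classical all_reals all_analysis.
Set Implicit Arguments. Unset Strict Implicit. Unset Printing Implicit Defensive.
Import Order.TTheory GRing.Theory Num.Theory.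
Import numFieldNormedType.Exports.
Local Open Scope classical_set_scope.
Local Open Scope ring_scope.

Definition enorm (R : realType) (n : nat) (v : 'rV[R]_n) : R :=
  Num.sqrt (\sum_(i < n) (v ord0 i) ^+ 2).

Definition eball (R : realType) (n : nat) (c : 'rV[R]_n) (r : R) : set 'rV[R]_n :=
  [set y | enorm (y - c) <= r].

Definition mink_ball (R : realType) (n : nat) (A : set 'rV[R]_n) (r : R)
  : set 'rV[R]_n :=
  [set y | exists2 a, A a & enorm (y - a) <= r].

Definition hausdorff (R : realType) (n : nat) (K0 K1 : set 'rV[R]_n) : R :=
  inf [set l : R | 0 < l /\ K0 `<=` mink_ball K1 l /\ K1 `<=` mink_ball K0 l].

Definition convex_set_rV (R : realType) (n : nat) (K : set 'rV[R]_n) : Prop :=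
  forall x y (t : R), K x -> K y -> 0 <= t -> t <= 1 ->
    K (t *: x + (1 - t) *: y).

Definition convex_body (R : realType) (n : nat) (K : set 'rV[R]_n) : Prop :=
  [/\ compact K, convex_set_rV K & K !=set0].

Definition S_n (R : realType) (n : nat) (K : set 'rV[R]_n) : Prop :=
  convex_body K /\
  exists C : set 'rV[R]_n, K = \bigcap_(c in C) eball c 1.

(* Main.v *)
Require Import Defs.
From HB Require Import structures.
From mathcomp Require Import all_boot all_order all_algebra.
From mathcomp Require Import all_classical all_reals all_analysis.
From mathcomp Require Import lra.
Import Order.TTheory GRing.Theory Num.Theory.
Import numFieldNormedType.Exports.
Local Open Scope classical_set_scope.
Local Open Scope ring_scope.

Lemma enorm_sub (R : realType) (n : nat) (a b : 'rV[R]_n) :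
  enorm (a - b) = enorm (b - a).
Proof.
rewrite /enorm; congr Num.sqrt; apply: eq_bigr => i _.
by rewrite -opprB mxE sqrrN.
Qed.

Lemma enorm_bound (R : realType) (n : nat) (v : 'rV[R]_n) (N : R) :
  `|v| <= N -> enorm v <= Num.sqrt (n%:R * N ^+ 2).
Proof.
move=> hv; rewrite /enorm; apply: ler_wsqrtr.
apply: (@le_trans _ _ (\sum_(i < n) N ^+ 2)); last first.
  by rewrite sumr_const card_ord mulr_natl.
apply: ler_sum => i _.
have hi : `|v ord0 i| <= N.
  apply: le_trans hv.
  have := le_bigmax 0 (fun ij : 'I_1 * 'I_n => `|v ij.1 ij.2|) (ord0, i).
  by rewrite -mx_normrE.
move: hi; rewrite ler_norml => /andP [h1 h2].
nra.
Qed.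

Theorem lemma13 (R : realType) (n : nat) (K : set 'rV[R]_n) :
  S_n K ->
  K = \bigcap_(x in [set: 'rV[R]_n]) eball x (hausdorff [set x] K).
Proof.
move=> [[cK _ [y0 Ky0]] [C KC]].
apply/seteqP; split.
- move=> y Ky x _; rewrite /eball /hausdorff /=.
  apply: lb_le_inf; last first.
    move=> l [_ [_ Hl]]; have [a /= -> ha] := Hl y Ky; exact: ha.
  have [M [_ MK]] := compact_bounded cK.
  set N := (`|M| + 1) + `|x|.
  set B := Num.sqrt (n%:R * N ^+ 2).
  have hB : forall z, K z -> enorm (z - x) <= B.
    move=> z Kz; apply: enorm_bound.
    have hz : `|z| <= `|M| + 1.
      apply: (MK (`|M| + 1)) => //.
      by apply: (le_lt_trans (ler_norm M)); rewrite ltrDl.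
    apply: (le_trans (ler_normB z x)).
    by rewrite /N lerD2r.
  have B0 : 0 <= B by apply: sqrtr_ge0.
  exists (B + 1); split; first by rewrite ltr_pwDr.
  split.
  + move=> a /= ->; exists y0 => //; rewrite enorm_sub.
    by apply: (le_trans (hB _ Ky0)); rewrite lerDl.
  + move=> z Kz; exists x => //.
    by apply: (le_trans (hB _ Kz)); rewrite lerDl.
- move=> y Hy; rewrite KC => c Cc.
  have Kin : forall z, K z -> enorm (z - c) <= 1.
    by move=> z; rewrite KC => /(_ c Cc).
  apply: (le_trans (Hy c I)).
  have hl : has_lbound [set l : R | 0 < l /\ [set c] `<=` mink_ball K l
                                      /\ K `<=` mink_ball [set c] l].
    by exists 0 => l [/ltW].
  apply: (ge_inf hl); split => //; split.
  + move=> a /= ->; exists y0 => //; rewrite enorm_sub; exact: Kin.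
  + move=> z Kz; exists c => //; exact: Kin.
Qed.
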